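(* Let $\Gamma=(N,A,u)$ be a finite normal form game. If $\operatorname{Aut}(\Gamma)$ has a subgroup $G$ isomorphic to $S_N$ with $G_N=\{\mathrm{id}_\Gamma\}$, then $\Gamma$ is $n$-transitively standard symmetric; that is, $\operatorname{Aut}(\Gamma)$ is player $n$-transitive and $\operatorname{Aut}(\Gamma)$ has a subgroup that is player transitive and strategy trivial.
   Context: A game bijection $g=(\pi;(\tau_i)_{i\in N})$ of $\Gamma$ consists of $\pi\in S_N$ (its player permutation) and bijections $\tau_i:A_i\to A_{\pi(i)}$; write $g(i)=\pi(i)$, $g(s_i)=\tau_i(s_i)$, $g(s)=(\tau_{\pi^{-1}(j)}(s_{\pi^{-1}(j)}))_{j\in N}$; composition is $(\eta;(\phi_j))\circ(\pi;(\tau_i))=(\eta\circ\pi;(\phi_{\pi(i)}\circ\tau_i)_{i\in N})$, identity $\mathrm{id}_\Gamma=(\mathrm{id}_N;(\mathrm{id}_{A_i}))$. $g$ is an automorphism if $u_i(s)=u_{g(i)}(g(s))$ for all $i\in N$, $s\in A$; $\operatorname{Aut}(\Gamma)$ is the group of automorphisms. For a subgroup $G$, $G_N=\{g\in G: g(i)=i\ \forall i\in N\}$. A subgroup is player transitive if its player permutations act transitively on $N$, player $n$-transitive if its set of player permutations is all of $S_N$, and strategy trivial if for each $i\in N$, $g(s_i)=s_i$ for all $g$ in it with $g(i)=i$ and all $s_i\in A_i$. *)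

(* Defs.v *)
From HB Require Import structures.
From mathcomp Require Import all_boot all_order all_algebra all_fingroup.
Set Implicit Arguments. Unset Strict Implicit. Unset Printing Implicit Defensive.

(* A game bijection g = (pi; (tau_i)_i) is encoded as the permutation of the
   finite disjoint union  PS A = {i : 'I_n & A i}  of all (player, strategy)
   pairs sending (i, s_i) to (pi i, tau_i s_i).  Such a permutation is exactly
   one that maps fibres to fibres, i.e. tag (sigma x) = pi (tag x) for a
   (necessarily unique) player permutation pi. *)

Section Game.
Variables (n : nat) (A : 'I_n -> finType).

Definition PS := {i : 'I_n & A i}.
Definition profile := {dffun forall i : 'I_n, A i}.

Definition gb_player (sigma : {perm PS}) (pi : {perm 'I_n}) : Prop :=
  forall x : PS, tag (sigma x) = pi (tag x).

Definition is_game_bij (sigma : {perm PS}) : Prop :=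
  exists pi : {perm 'I_n}, gb_player sigma pi.

Definition gb_profile (sigma : {perm PS}) (pi : {perm 'I_n}) (s t : profile) : Prop :=
  forall k : 'I_n, sigma (Tagged A (s k)) = Tagged A (t (pi k)).

Variable R : Type.

Definition is_aut (u : 'I_n -> profile -> R) (sigma : {perm PS}) : Prop :=
  exists pi : {perm 'I_n}, gb_player sigma pi /\
    forall (i : 'I_n) (s t : profile), gb_profile sigma pi s t ->
      u i s = u (pi i) t.

Definition aut_player_ntransitive (u : 'I_n -> profile -> R) : Prop :=
  forall pi : {perm 'I_n}, exists sigma : {perm PS}, is_aut u sigma /\ gb_player sigma pi.

Definition player_transitive (H : {set {perm PS}}) : Prop :=
  forall i j : 'I_n, exists2 sigma, sigma \in H &
    exists pi : {perm 'I_n}, gb_player sigma pi /\ pi i = j.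

Definition strategy_trivial (H : {set {perm PS}}) : Prop :=
  forall (i : 'I_n) (sigma : {perm PS}), sigma \in H ->
    forall pi : {perm 'I_n}, gb_player sigma pi -> pi i = i ->
      forall s : A i, sigma (Tagged A s) = Tagged A s.

Definition ntransitively_standard_symmetric (u : 'I_n -> profile -> R) : Prop :=
  aut_player_ntransitive u /\
  exists H : {group {perm PS}},
    (forall sigma, sigma \in H -> is_aut u sigma) /\
    player_transitive H /\ strategy_trivial H.

End Game.

(* Main.v *)
Require Import Defs.
From HB Require Import structures.
From mathcomp Require Import all_boot all_order all_algebra all_fingroup.
From mathcomp Require Import zify.
Set Implicit Arguments. Unset Strict Implicit. Unset Printing Implicit Defensive.

Section Aux.
Variables (n : nat) (A : 'I_n -> finType).

Lemma gb_player_mul (s t : {perm PS A}) p q :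
  gb_player s p -> gb_player t q -> gb_player (s * t)%g (p * q)%g.
Proof. by move=> hs ht x; rewrite !permM ht hs. Qed.

Lemma gb_player_exp (s : {perm PS A}) p k :
  gb_player s p -> gb_player (s ^+ k)%g (p ^+ k)%g.
Proof.
move=> hs; elim: k => [|k IH]; first by move=> x; rewrite !expg0 !perm1.
by rewrite !expgSr; apply: gb_player_mul.
Qed.

Definition cyc : {perm 'I_n} := perm (@ordS_inj n).

Lemma cycX k (j : 'I_n) : val ((cyc ^+ k)%g j) = (j + k) %% n.
Proof.
elim: k => [|k IH]; first by rewrite expg0 perm1 addn0 modn_small.
rewrite expgSr permM /cyc permE /= IH.
by rewrite -addn1 modnDml addn1 addnS.
Qed.
End Aux.

Theorem proposition5p6 (R : realFieldType) (n : nat) (A : 'I_n -> finType)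
    (u : 'I_n -> profile A -> R)
    (A_nonempty : forall i : 'I_n, 0 < #|A i|)
    (G : {group {perm PS A}})
    (G_aut : forall sigma, sigma \in G -> is_aut u sigma)
    (G_iso : G \isog [set: {perm 'I_n}])
    (G_N : forall sigma, sigma \in G ->
             (forall x : PS A, tag (sigma x) = tag x) -> sigma = 1%g) :
  ntransitively_standard_symmetric u.
Proof.
have a0 : forall i, A i.
  by move=> i; move: (A_nonempty i) => /card_gt0P/sigW [x _].
pose pl (s : {perm PS A}) i := tag (s (Tagged A (a0 i))).
have plE s p : gb_player s p -> forall i, pl s i = p i.
  by move=> h i; rewrite /pl h.
have injG : {in G &, forall s t, (forall i, pl s i = pl t i) -> s = t}.
  move=> s t sG tG h.
  case: (G_aut s sG) => ps [hs _]; case: (G_aut t tG) => pt [ht _].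
  have h1 : (t * s^-1)%g = 1%g.
    apply: G_N; first by rewrite groupM ?groupV.
    move=> x; rewrite permM; set y := (s^-1)%g (t x).
    have : tag (s y) = tag (t x) by rewrite /y permKV.
    rewrite hs ht -(plE _ _ ht) -h (plE _ _ hs).
    exact: perm_inj.
  by apply/eqP; rewrite eq_sym eq_mulgV1 h1.
pose f s := [ffun i => pl s i] : {ffun 'I_n -> 'I_n}.
pose P := [set [ffun i => p i] | p : {perm 'I_n}].
have cardP : #|P| = #|[set: {perm 'I_n}]|.
  rewrite card_imset ?cardsT //.
  move=> p q /ffunP h; apply/permP => i; move: (h i); rewrite !ffunE.
  done.
have fG : f @: G = P.
  apply/eqP; rewrite eqEcard; apply/andP; split.
    apply/subsetP => _ /imsetP [s sG ->].
    case: (G_aut s sG) => p [hp _].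
    apply/imsetP; exists p => //; apply/ffunP=> i; rewrite !ffunE (plE _ _ hp).
    done.
  rewrite cardP -(card_isog G_iso) card_in_imset //.
  move=> s t sG tG /ffunP h; apply: injG => // i; move: (h i); rewrite !ffunE.
  done.
have surj p : exists2 s, s \in G & gb_player s p.
  have : [ffun i => p i] \in f @: G by rewrite fG; apply/imsetP; exists p.
  case/imsetP => s sG /ffunP h; exists s => //.
  case: (G_aut s sG) => q [hq _].
  move=> x; rewrite hq; move: (h (tag x)); rewrite !ffunE (plE _ _ hq).
  by move=> ->.
split.
  by move=> p; case: (surj p) => s sG hs; exists s; split => //; exact: G_aut.
case: (surj (@cyc n)) => g gG hg.
exists <[g]>%G; split; [|split].
- by move=> s /cycleP [k ->]; apply: G_aut; exact: groupX.
- move=> i j; exists (g ^+ (j + n - i))%g; first by rewrite mem_cycle.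
  exists (@cyc n ^+ (j + n - i))%g; split; first exact: gb_player_exp.
  apply/val_inj; rewrite cycX /=.
  have -> : i + (j + n - i) = j + n by have := ltn_ord i; lia.
  by rewrite modnDr modn_small.
- move=> i s /cycleP [k ->] p hp hpi a.
  have hk := gb_player_exp k hg.
  have e : (@cyc n ^+ k)%g i = i.
    rewrite -{2}hpi -(hk (Tagged A a)); exact: (hp (Tagged A a)).
  have ek : k %% n = 0.
    move: (congr1 val e); rewrite cycX.
    move=> H; have : (i + k == i + 0 %[mod n]).
      by rewrite /= H addn0 modn_small.
    by rewrite eqn_modDl mod0n => /eqP.
  have g1 : (g ^+ k)%g = 1%g.
    apply: G_N; first exact: groupX.
    move=> x; rewrite hk; apply: val_inj; rewrite cycX -modnDmr ek addn0 modn_small //.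
  by rewrite g1 perm1.
Qed.
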